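(* Let $X$ be a continuum and $Y\subset X$ a totally disconnected subset. If $y\in\Lambda(Y)$, then $F(y)$ is a non-degenerate subcontinuum of $X$ and $F(y)\cap Y=\{y\}$.
   Context: A continuum is a compact connected metric space. For $Y\subset X$ and $y\in Y$, let $\mathcal U_y$ be the collection of all open subsets $U$ of $X$ with $y\in U$ and $\partial U\subset X\setminus Y$ (boundary taken in $X$), and put $F(y)=\bigcap_{U\in\mathcal U_y}\overline U$. $Y$ is totally disconnected if every two distinct points of $Y$ lie in disjoint clopen subsets of $Y$. $Y$ is zero-dimensional at $y$ if $y$ has a neighborhood basis in $Y$ of clopen subsets of $Y$; $\Lambda(Y)$ is the set of points at which $Y$ is not zero-dimensional. *)

(* Defs.v *)
From HB Require Import structures.
From mathcomp Require Import all_boot all_order all_algebra.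
From mathcomp Require Import all_classical all_reals all_analysis.
Set Implicit Arguments. Unset Strict Implicit. Unset Printing Implicit Defensive.
Import Order.TTheory GRing.Theory Num.Theory.
Local Open Scope classical_set_scope.

Section Defs.
Context {T : topologicalType}.

Definition bdry (U : set T) : set T := closure U `\` interior U.

Definition Ucal (Y : set T) (y : T) : set (set T) :=
  [set U | open U /\ U y /\ bdry U `<=` ~` Y].

Definition Fset (Y : set T) (y : T) : set T :=
  \bigcap_(U in Ucal Y y) closure U.

Definition rel_open (Y A : set T) : Prop := exists2 O, open O & A = O `&` Y.
Definition rel_closed (Y A : set T) : Prop := exists2 C, closed C & A = C `&` Y.
Definition rel_clopen (Y A : set T) : Prop :=
  A `<=` Y /\ rel_open Y A /\ rel_closed Y A.

Definition totally_disconnected_set (Y : set T) : Prop :=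
  forall a b, Y a -> Y b -> a <> b ->
    exists A B, [/\ rel_clopen Y A, rel_clopen Y B, A a, B b & A `&` B = set0].

Definition zero_dim_at (Y : set T) (y : T) : Prop :=
  forall N, open N -> N y -> exists A, [/\ rel_clopen Y A, A y & A `<=` N `&` Y].

Definition Lambda (Y : set T) : set T := [set y | Y y /\ ~ zero_dim_at Y y].

End Defs.

(* Main.v *)
Require Import Defs.
From HB Require Import structures.
From mathcomp Require Import all_boot all_order all_algebra.
From mathcomp Require Import all_classical all_reals all_analysis.
Local Open Scope classical_set_scope.

Import Order.TTheory GRing.Theory Num.Theory.

Section Aux.
Context {T : topologicalType}.

Lemma open_disj_closure (G H : set T) x :
  open H -> H x -> G `&` H = set0 -> ~ closure G x.
Proof.
move=> oH Hx GH0 clG.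
have nH : nbhs x H by rewrite openE in oH; exact: (oH x Hx).
have [z [Gz Hz]] := clG H nH.
by have : (G `&` H) z by []; rewrite GH0.
Qed.

Lemma bdry_openE (U : set T) x : open U -> bdry U x -> closure U x /\ ~ U x.
Proof. by move=> oU; rewrite /bdry (interior_id U).1. Qed.
Arguments bdry_openE {U x}.
Arguments open_disj_closure {G H x}.

Lemma Ucal_setT (Y : set T) y : Ucal Y y setT.
Proof.
split; first exact: openT. split => //.
by move=> x /(bdry_openE openT) [_] /(_ I).
Qed.

Lemma Ucal_I (Y : set T) y U V :
  Ucal Y y U -> Ucal Y y V -> Ucal Y y (U `&` V).
Proof.
move=> [oU [Uy bU]] [oV [Vy bV]]; split; first exact: openI.
split => //.
move=> x /(bdry_openE (openI oU oV)) [clx nx].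
have clU : closure U x by apply: (closureS (@subIsetl _ U V)).
have clV : closure V x by apply: (closureS (@subIsetr _ U V)).
have [Ux|nUx] := pselect (U x).
- apply: bV; rewrite /bdry (interior_id V).1 //; split => // Vx; exact: nx.
- by apply: bU; rewrite /bdry (interior_id U).1.
Qed.

Lemma Ucal_foldr (Y : set T) y (s : seq (set T)) :
  (forall U, U \in s -> Ucal Y y U) ->
  Ucal Y y (foldr setI setT s) /\ forall U, U \in s -> foldr setI setT s `<=` U.
Proof.
elim: s => [|U s IH] hs /=; first by split; [exact: Ucal_setT|].
have [IH1 IH2] := IH (fun V hV => hs V (mem_behead (s:=U :: s) hV)).
split; first by apply: Ucal_I => //; apply: hs; rewrite mem_head.
move=> V; rewrite in_cons => /orP [/eqP ->|hV]; first exact: subIsetl.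
exact: subset_trans (@subIsetr _ U _) (IH2 V hV).
Qed.

End Aux.

Section Metric.
Local Open Scope ring_scope.
Context {R : realType} {X : pseudoMetricType R}.

Definition nbd (P Q : set X) : set X :=
  [set x | exists a (e : R), [/\ P a, 0 < e,
     (forall z, ball a (e + e) z -> ~ Q z) & (ball a e)° x]].

Lemma nbd_open P Q : open (nbd P Q).
Proof.
rewrite openE => x [a [e [Pa e0 hb hx]]].
have : nbhs x (ball a e)° by have := open_interior (ball a e); rewrite openE; apply.
apply: filterS => w hw; exists a, e; split => //.
Qed.

Lemma nbd_sub (P Q : set X) :
  (forall a, P a -> exists2 e : R, (0 < e)%R & forall z, ball a e z -> ~ Q z) ->
  P `<=` nbd P Q.
Proof.
move=> h a Pa; have [e e0 he] := h a Pa.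
exists a, (e / 2); split => //; first by rewrite divr_gt0.
  by rewrite -splitr.
by apply: nbhsx_ballx; rewrite divr_gt0.
Qed.

Lemma nbd_disj (P Q : set X) : nbd P Q `&` nbd Q P = set0.
Proof.
apply/seteqP; split => // x [[a [e1 [Pa e10 h1 x1]]] [b [e2 [Qb e20 h2 x2]]]].
have {}x1 := interior_subset x1; have {}x2 := interior_subset x2.
have [le21|le12] := leP e2 e1.
- apply: (h1 b _ Qb); apply: (le_ball (e1 := e1 + e2)); first by rewrite lerD2l.
  exact: ball_triangle x1 (ball_sym x2).
- apply: (h2 a _ Pa); apply: (le_ball (e1 := e2 + e1)); first by rewrite lerD2l ltW.
  exact: ball_triangle x2 (ball_sym x1).
Qed.

End Metric.

Section Cpt.
Context {T : topologicalType}.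

Lemma Fset_small (Y : set T) y (cpt : compact [set: T]) (W : set T) :
  open W -> Fset Y y `<=` W -> exists U, Ucal Y y U /\ closure U `<=` W.
Proof.
move=> oW FW; apply: contrapT => hne.
pose B := fun U => closure U `&` ~` W.
have ne : forall U, Ucal Y y U -> B U !=set0.
  move=> U hU; have [//|h] := pselect (B U !=set0).
  exfalso; apply: hne; exists U; split => // x clx.
  by apply: contrapT => nWx; apply: h; exists x.
have fF : Filter (filter_from (Ucal Y y) B).
  apply: filter_from_filter; first by exists setT; exact: Ucal_setT.
  move=> U V hU hV; exists (U `&` V); first exact: Ucal_I.
  move=> x [clx nWx]; split; split => //.
    exact: (closureS (@subIsetl _ U V)).
  exact: (closureS (@subIsetr _ U V)).
have pF : ProperFilter (filter_from (Ucal Y y) B) by apply: filter_from_proper.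
have [|p [_ clp]] := cpt (filter_from (Ucal Y y) B).
  by exists setT; [exact: Ucal_setT|].
rewrite clusterE in clp.
have hp : forall U, Ucal Y y U -> B U p.
  move=> U hU; have clB : closed (B U).
    by apply: closedI; [exact: closed_closure| exact: open_closedC].
  apply: clB; apply: clp; exists U => //.
have [U hU] : exists U, Ucal Y y U by exists setT; exact: Ucal_setT.
have := (hp U hU).2; apply; apply: FW => V hV; exact: (hp V hV).1.
Qed.

End Cpt.

Arguments Fset_small {T Y y} cpt {W}.
Arguments open_disj_closure {T G H x}.
Arguments bdry_openE {T U x}.

Theorem lemma1 (R : realType) (X : pseudoMetricType R)
  (Xhaus : hausdorff_space X) (Xcpt : compact [set: X])
  (Xconn : connected [set: X])
  (Y : set X) (Ytd : totally_disconnected_set Y) (y : X) (hy : Lambda Y y) :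
  [/\ compact (Fset Y y), connected (Fset Y y),
      (exists a b, [/\ Fset Y y a, Fset Y y b & a <> b]) &
      Fset Y y `&` Y = [set y]].
Proof.
have hFy : Fset Y y y by move=> U [_ [Uy _]]; exact: subset_closure.
have clF : closed (Fset Y y).
  by rewrite /Fset; apply: closed_bigI => U _; exact: closed_closure.
have claim : forall G H : set X, open G -> open H -> G `&` H = set0 ->
    Fset Y y `<=` G `|` H -> G y -> Fset Y y `<=` G.
  move=> G H oG oH GH0 FGH Gy.
  have [U [[oU [Uy bU]] clU]] := Fset_small Xcpt (openU oG oH) FGH.
  have U'G : closure (U `&` G) `<=` G.
    move=> x clx; have : (G `|` H) x.
      by apply: clU; exact: (closureS (@subIsetl _ U G)).
    have dis : (U `&` G) `&` H = set0.
      apply/seteqP; split => // z [[_ Gz] Hz].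
      by have : (G `&` H) z by []; rewrite GH0.
    case => // Hx; exfalso; exact: (open_disj_closure oH Hx dis clx).
  have hU' : Ucal Y y (U `&` G).
    split; first exact: openI. split => //.
    move=> x /(bdry_openE (openI oU oG)) [clx nx] Yx.
    have Gx := U'G x clx.
    apply: (bU x _ Yx); rewrite /bdry (interior_id U).1 //; split.
      exact: (closureS (@subIsetl _ U G)).
    by move=> Ux; apply: nx.
  by move=> x Fx; apply: U'G; apply: Fx.
split.
- by apply: subclosed_compact; [exact: clF|exact: Xcpt|].
- move=> B [b Bb] [Co oCo eB1] [Cc cCc eB2].
  have h1 : forall a, B a -> exists2 e : R, (0 < e)%R &
      forall z, ball a e z -> ~ (Fset Y y `\` B) z.
    move=> a Ba; have : Co a by move: Ba; rewrite eB1 => -[].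
    rewrite openE in oCo => /oCo /nbhs_ballP [e e0 he].
    exists e => // z /he Coz [Fz nBz]; apply: nBz; rewrite eB1; by split.
  have h2 : forall a, (Fset Y y `\` B) a -> exists2 e : R, (0 < e)%R &
      forall z, ball a e z -> ~ B z.
    move=> a [Fa nBa]; have : (~` Cc) a by move=> Cca; apply: nBa; rewrite eB2.
    have oC : open (~` Cc) by rewrite openC.
    rewrite openE in oC => /oC /nbhs_ballP [e e0 he].
    by exists e => // z /he nCz; rewrite eB2 => -[_ Cz]; exact: nCz Cz.
  have oG := nbd_open B (Fset Y y `\` B).
  have oH := nbd_open (Fset Y y `\` B) B.
  have GH0 := nbd_disj B (Fset Y y `\` B).
  have BG := nbd_sub _ _ h1; have SH := nbd_sub _ _ h2.
  have FGH : Fset Y y `<=` nbd B (Fset Y y `\` B) `|` nbd (Fset Y y `\` B) B.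
    move=> x Fx; have [Bx|nBx] := pselect (B x); first by left; exact: BG.
    by right; apply: SH.
  have BF : B `<=` Fset Y y by rewrite eB1 => x [].
  have [By|nBy] := pselect (B y).
  + have FG := claim _ _ oG oH GH0 FGH (BG y By).
    apply/seteqP; split => // x Fx; apply: contrapT => nBx.
    have : (nbd B (Fset Y y `\` B) `&` nbd (Fset Y y `\` B) B) x.
      by split; [exact: FG | exact: SH].
    by rewrite GH0.
  + have HG0 : nbd (Fset Y y `\` B) B `&` nbd B (Fset Y y `\` B) = set0.
      by rewrite setIC.
    have FHG : Fset Y y `<=` nbd (Fset Y y `\` B) B `|` nbd B (Fset Y y `\` B).
      by rewrite setUC.
    have FH := claim _ _ oH oG HG0 FHG (SH y (conj hFy nBy)).
    exfalso.
    have : (nbd B (Fset Y y `\` B) `&` nbd (Fset Y y `\` B) B) b.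
      by split; [exact: BG | exact: FH (BF b Bb)].
    by rewrite GH0.
- apply: contrapT => hnd; apply: hy.2 => N oN Ny.
  have FN : Fset Y y `<=` N.
    move=> x Fx; have -> : x = y; last by [].
    by apply: contrapT => nxy; apply: hnd; exists x, y; split.
  have [U [[oU [Uy bU]] clU]] := Fset_small Xcpt oN FN.
  exists (U `&` Y); split.
  + split; first exact: subIsetr. split; first by exists U.
    exists (closure U); first exact: closed_closure.
    apply/seteqP; split => x [hx Yx]; split => //; first exact: subset_closure.
    apply: contrapT => nUx; apply: (bU x _ Yx); by rewrite /bdry (interior_id U).1.
  + by split; [|exact: hy.1].
  + move=> x [Ux Yx]; split => //; apply: clU; exact: subset_closure.
- apply/seteqP; split => [x [Fx Yx]|x ->]; last by split => //; exact: hy.1.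
  apply: contrapT => nxy.
  have [A [B0 [cA _ Ay Bx AB0]]] :=
    Ytd y x hy.1 Yx (fun e => nxy (esym e)).
  case: cA => AY [[Oa oO eA] [Cl cC eC]].
  have h1 : forall a, A a -> exists2 e : R, (0 < e)%R &
      forall z, ball a e z -> ~ (Y `\` A) z.
    move=> a Aa; have : Oa a by move: Aa; rewrite eA => -[].
    rewrite openE in oO => /oO /nbhs_ballP [e e0 he].
    exists e => // z /he Oz [Yz nAz]; apply: nAz; rewrite eA; by split.
  have h2 : forall a, (Y `\` A) a -> exists2 e : R, (0 < e)%R &
      forall z, ball a e z -> ~ A z.
    move=> a [Ya nAa]; have : (~` Cl) a by move=> Ca; apply: nAa; rewrite eC.
    have oC : open (~` Cl) by rewrite openC.
    rewrite openE in oC => /oC /nbhs_ballP [e e0 he].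
    by exists e => // z /he nCz; rewrite eC => -[Cz _]; exact: nCz Cz.
  have oG := nbd_open A (Y `\` A).
  have oH := nbd_open (Y `\` A) A.
  have GH0 := nbd_disj A (Y `\` A).
  have AG := nbd_sub _ _ h1; have SH := nbd_sub _ _ h2.
  have UG : Ucal Y y (nbd A (Y `\` A)).
    split => //; split; first exact: AG.
    move=> z /(bdry_openE oG) [clz nz] Yz.
    have [Az|nAz] := pselect (A z); first exact: nz (AG z Az).
    exact: open_disj_closure oH (SH z (conj Yz nAz)) GH0 clz.
  have clGx := Fx _ UG.
  have nAx : ~ A x by move=> Ax; have : (A `&` B0) x by []; rewrite AB0.
  exact: open_disj_closure oH (SH x (conj Yx nAx)) GH0 clGx.
Qed.
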